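(* Under Assumptions A1–A4, for every evaluation step $n\in\{E,2E,3E,\dots\}$ the lengths produced by the core Two-Tailed Averaging algorithm satisfy $S(n)<\mathcal{O}(n)$ and $L(n)<2\mathcal{O}(n)+E$.
   Context: Let $\Theta=\mathbb{R}^d$, let $(\theta_t)_{t\in\mathbb{N}_0}$ be a sequence in $\Theta$, let $f\colon\Theta\to\mathbb{R}$ be a loss function, and let $E\in\mathbb{N}$ be the evaluation period. Evaluation steps are the multiples of $E$. For integers $t\ge \Delta\ge 1$ write $\mathrm{avg}(t,\Delta)=\frac{1}{\Delta}\sum_{i=t+1-\Delta}^{t}\theta_i$; set $f(\mathrm{avg}(t,0))=+\infty$. Core Two-Tailed Averaging: it maintains integers $S,L$ and vectors $\theta^S,\theta^L$, initially $S=L=0$, $\theta^S=\theta^L=0$. For $t=1,2,\dots$: first $\theta_t$ is added to both averages, i.e. $\theta^S\leftarrow\theta^S+(\theta_t-\theta^S)/(S+1)$, $S\leftarrow S+1$, and $\theta^L\leftarrow\theta^L+(\theta_t-\theta^L)/(L+1)$, $L\leftarrow L+1$ (so $\theta^S=\mathrm{avg}(t,S)$, $\theta^L=\mathrm{avg}(t,L)$). Then, if $E$ divides $t$: if $f(\theta^S)\le f(\theta^L)$, a switch is performed: $L\leftarrow S$, $\theta^L\leftarrow\theta^S$, $S\leftarrow 0$. $S(t),L(t)$ denote the values after the $t$-th pass through the loop. Optimal length: for $t\ge1$, $\mathcal{O}(t)$ is a (fixed) minimizer of $\Delta\mapsto f(\mathrm{avg}(t,\Delta))$ over $\Delta\in\{1,\dots,t\}$;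 $\mathcal{O}_E(n)=\lfloor \mathcal{O}(n)/E\rfloor E$ and $\mathcal{O}^E(n)=\lceil \mathcal{O}(n)/E\rceil E$. Assumptions (for all evaluation steps $n\ge E$): A1: $\Delta\mapsto f(\mathrm{avg}(n,\Delta))$ is strictly decreasing on $\Delta\in\{0,E,2E,\dots,\mathcal{O}_E(n)\}$. A2: for every integer $n_+$ with $\mathcal{O}^E(n)\le n_+\le n$, $f(\mathrm{avg}(n,\mathcal{O}^E(n)))\le f(\mathrm{avg}(n,n_+))$. A3: there exists a positive multiple $n_s$ of $E$ with $\mathcal{O}(n+n_s)-\mathcal{O}(n)<n_s$. A4: $\mathcal{O}(n)\le\mathcal{O}(n+E)$. *)

(* Defs.v *)
From HB Require Import structures.
From mathcomp Require Import all_boot all_order all_algebra.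
From mathcomp Require Import reals constructive_ereal.
Set Implicit Arguments. Unset Strict Implicit. Unset Printing Implicit Defensive.
Import Order.TTheory GRing.Theory Num.Theory.
Local Open Scope ring_scope.

Section TTA.
Variables (R : realType) (d : nat).
Notation vec := 'rV[R]_d.
Variables (theta : nat -> vec) (f : vec -> R) (E : nat).

Definition avg (t D : nat) : vec :=
  (D%:R)^-1 *: \sum_((t.+1 - D)%N <= i < t.+1) theta i.

Definition favg (t D : nat) : \bar R :=
  if D == 0%N then +oo%E else (f (avg t D))%:E.

Definition tta_step (t : nat) (st : nat * nat * vec * vec) : nat * nat * vec * vec :=
  let: (s, l, thS, thL) := st in
  let thS' := thS + (s.+1%:R)^-1 *: (theta t - thS) in
  let S' := s.+1 in
  let thL' := thL + (l.+1%:R)^-1 *: (theta t - thL) in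
  let L' := l.+1 in
  if (E %| t)%N && (f thS' <= f thL') then (0%N, S', thS', thS')
  else (S', L', thS', thL').

Fixpoint tta_state (t : nat) : nat * nat * vec * vec :=
  match t with
  | 0 => (0%N, 0%N, 0, 0)
  | t'.+1 => tta_step t'.+1 (tta_state t')
  end.

Definition S_len (t : nat) : nat := (tta_state t).1.1.1.
Definition L_len (t : nat) : nat := (tta_state t).1.1.2.

Definition is_optimal_length (O : nat -> nat) : Prop :=
  forall t, (0 < t)%N ->
    [/\ (1 <= O t <= t)%N &
        forall D, (1 <= D <= t)%N -> f (avg t (O t)) <= f (avg t D)].

Definition O_lo (O : nat -> nat) (n : nat) : nat := (O n %/ E * E)%N.
Definition O_up (O : nat -> nat) (n : nat) : nat := ((O n + E - 1) %/ E * E)%N.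

Definition is_eval_step (n : nat) : Prop := (0 < n)%N /\ (E %| n)%N.

Definition A1 (O : nat -> nat) : Prop :=
  forall n, is_eval_step n ->
    forall k k' : nat, (k < k')%N -> (k' * E <= O_lo O n)%N ->
      (favg n (k' * E) < favg n (k * E))%E.

Definition A2 (O : nat -> nat) : Prop :=
  forall n, is_eval_step n ->
    forall np : nat, (O_up O n <= np <= n)%N ->
      (favg n (O_up O n) <= favg n np)%E.

Definition A3 (O : nat -> nat) : Prop :=
  forall n, is_eval_step n ->
    exists ns : nat, [/\ (0 < ns)%N, (E %| ns)%N &
                       (O (n + ns)%N < O n + ns)%N].

Definition A4 (O : nat -> nat) : Prop :=
  forall n, is_eval_step n -> (O n <= O (n + E)%N)%N.

End TTA.

(* Main.v *)
Require Import Defs.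
From HB Require Import structures.
From mathcomp Require Import all_boot all_order all_algebra.
From mathcomp Require Import reals constructive_ereal.
From mathcomp Require Import ring lra zify.
Import Order.TTheory GRing.Theory Num.Theory.
Local Open Scope ring_scope.

Section Aux.
Variables (R : realType) (d : nat) (theta : nat -> 'rV[R]_d)
  (f : 'rV[R]_d -> R) (E : nat).

Lemma avgS t s : (s <= t)%N ->
  avg theta t s + (s.+1%:R)^-1 *: (theta t.+1 - avg theta t s) = avg theta t.+1 s.+1.
Proof.
move=> hst; rewrite /avg subSS [in RHS]big_nat_recr /=; last by lia.
case: s hst => [|s] hst.
  rewrite subn0 big_geq // !scaler0 add0r subr0 add0r.
  done.
have h1 : (s.+1%:R : R) != 0 by rewrite pnatr_eq0.
have h2 : (s.+2%:R : R) != 0 by rewrite pnatr_eq0.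
suff key : forall u v : 'rV[R]_d, s.+1%:R^-1 *: u + s.+2%:R^-1 *: (v - s.+1%:R^-1 *: u) =
  s.+2%:R^-1 *: (u + v) by apply: key.
move=> u v.
rewrite scalerDr scalerN scalerA [RHS]scalerDr addrCA [RHS]addrC; congr (_ + _).
rewrite -scaleNr -scalerDl; congr (_ *: _).
field.
have hs := ler0n R s; apply/andP; split; apply/eqP; lra.
Qed.

Lemma avgS0 t a : a + ((0%N).+1%:R)^-1 *: (theta t.+1 - a) = avg theta t.+1 1.
Proof.
rewrite invr1 scale1r addrC subrK /avg invr1 scale1r subSS subn0 big_nat1 //.
Qed.

Lemma avgS' t s a : (s <= t)%N -> (0 < s -> a = avg theta t s)%N ->
  a + (s.+1%:R)^-1 *: (theta t.+1 - a) = avg theta t.+1 s.+1.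
Proof.
case: s => [|s] hs ha; first exact: avgS0.
by rewrite ha // avgS.
Qed.

Lemma state_inv t : let st := tta_state theta f E t in
  [/\ (st.1.1.1 <= st.1.1.2 <= t)%N, (0 < st.1.1.1)%N -> st.1.2 = avg theta t st.1.1.1 &
      st.2 = avg theta t st.1.1.2].
Proof.
elim: t => [|t IH].
  by split => //=; rewrite /avg big_geq // scaler0.
have -> : tta_state theta f E t.+1 = tta_step theta f E t.+1 (tta_state theta f E t) by [].
move: IH; case: (tta_state theta f E t) => [[[s l] a] b] /= [/andP[hsl hlt] ha ->].
rewrite /tta_step (avgS' _ _ _ (leq_trans hsl hlt) ha) avgS //; case: ifP => _ /=; split => //; lia.

Qed.

Lemma len_bounds t : (S_len theta f E t <= L_len theta f E t <= t)%N.
Proof. by rewrite /S_len /L_len; case: (state_inv t). Qed.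

Lemma step_len t : (S_len theta f E t.+1, L_len theta f E t.+1) =
  if (E %| t.+1)%N && (f (avg theta t.+1 (S_len theta f E t).+1)
                        <= f (avg theta t.+1 (L_len theta f E t).+1))
  then (0%N, (S_len theta f E t).+1)
  else ((S_len theta f E t).+1, (L_len theta f E t).+1).
Proof.
rewrite /S_len /L_len.
have -> : tta_state theta f E t.+1 = tta_step theta f E t.+1 (tta_state theta f E t) by [].
have := state_inv t.
case: (tta_state theta f E t) => [[[s l] a] b] /= [/andP[hsl hlt] ha ->].
rewrite /tta_step (avgS' _ _ _ (leq_trans hsl hlt) ha) avgS //; by case: ifP.
Qed.

Lemma run_len m j : (E %| m)%N -> (j < E)%N ->
  S_len theta f E (m + j) = (S_len theta f E m + j)%N /\
  L_len theta f E (m + j) = (L_len theta f E m + j)%N.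
Proof.
move=> hm; elim: j => [|j IH] hj; first by rewrite !addn0.
have [IH1 IH2] := IH (ltnW hj).
have := step_len (m + j); rewrite addnS.
have -> : (E %| (m + j).+1)%N = false.
  apply/negbTE/negP; rewrite -addnS (dvdn_addr _ hm) => /dvdn_leq h.
  by have := h isT; rewrite leqNgt hj.
by move=> /= [-> ->]; rewrite IH1 IH2 !addnS.
Qed.

Lemma eval_len m : (0 < E)%N -> (E %| m)%N ->
  (S_len theta f E (m + E), L_len theta f E (m + E)) =
  if f (avg theta (m + E) (S_len theta f E m + E)) <=
     f (avg theta (m + E) (L_len theta f E m + E))
  then (0%N, (S_len theta f E m + E)%N)
  else ((S_len theta f E m + E)%N, (L_len theta f E m + E)%N).
Proof.
move=> hE hm.
have hmE : (m + E = (m + E.-1).+1)%N by lia.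
have [r1 r2] := run_len m E.-1 hm (ltac:(lia)).
rewrite hmE step_len r1 r2 -hmE dvdn_addr // dvdnn /=.
have -> : ((S_len theta f E m + E.-1).+1 = S_len theta f E m + E)%N by lia.
have -> : ((L_len theta f E m + E.-1).+1 = L_len theta f E m + E)%N by lia.
by [].
Qed.

End Aux.


Lemma main_ind (R : realType) (d : nat) (theta : nat -> 'rV[R]_d)
  (f : 'rV[R]_d -> R) (E : nat) (O : nat -> nat) :
  (0 < E)%N -> is_optimal_length theta f O -> A2 theta f E O -> A4 E O ->
  forall k, let m := (k * E)%N in
  [/\ (E %| S_len theta f E m)%N, (E %| L_len theta f E m)%N &
     (0 < k)%N -> (S_len theta f E m < O m)%N /\
       (L_len theta f E m < S_len theta f E m + O m + E)%N].
Proof.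
move=> hE hopt hA2 hA4.
have hO : forall t, (0 < t)%N -> (1 <= O t <= t)%N by move=> t /hopt [].
elim=> [|k IH] /=.
  by rewrite mul0n /S_len /L_len /= dvdn0.
move: IH => /= [dS dL IH].
have hm : (E %| k * E)%N by rewrite dvdn_mull.
have hn : (k.+1 * E = k * E + E)%N by rewrite mulSnr.
rewrite hn.
set m := (k * E)%N in dS dL IH hm hn *.
set n := (m + E)%N.
have hOn := hO n ltac:(lia).
have hSm : (S_len theta f E m < O n)%N.
  case: (posnP k) => [k0|kpos].
    by rewrite /m k0 mul0n /S_len /=; lia.
  have [h1 _] := IH kpos.
  have hm0 : (0 < m)%N by rewrite /m muln_gt0 kpos hE.
  have := hA4 m (conj hm0 hm); rewrite /n; lia.
have hLm : (L_len theta f E m < S_len theta f E m + O n + E)%N.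
  case: (posnP k) => [k0|kpos].
    by rewrite /m k0 mul0n /S_len /L_len /=; lia.
  have [_ h2] := IH kpos.
  have hm0 : (0 < m)%N by rewrite /m muln_gt0 kpos hE.
  have := hA4 m (conj hm0 hm); rewrite /n; lia.
have [hsl hlm] := andP (@len_bounds _ _ theta f E m).
have := @eval_len _ _ theta f E m hE hm; rewrite -/n.
case: ifP => hsw [-> ->].
  split; [exact: dvdn0 | by rewrite dvdn_add // dvdnn | move=> _; lia].
have hlt : (S_len theta f E m + E < O n)%N.
  rewrite ltnNge; apply/negP => hge.
  case/dvdnP: dS => a ha.
  have hup : (O_up E O n = S_len theta f E m + E)%N.
    rewrite /O_up ha; apply/eqP; rewrite eqn_leq; apply/andP; split.
      rewrite -mulSnr leq_mul2r; apply/orP; right.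
      rewrite -ltnS ltn_divLR //; rewrite ha in hge; nia.
    rewrite -mulSnr leq_mul2r; apply/orP; right.
    rewrite leq_divRL //; rewrite ha in hSm; nia.
  have hev : is_eval_step E n.
    by split; [rewrite /n; lia | rewrite /n dvdn_add // dvdnn].
  have hr : (O_up E O n <= L_len theta f E m + E <= n)%N by rewrite hup /n; lia.
  have := hA2 n hev (L_len theta f E m + E)%N hr.
  rewrite hup /favg !ifF; try lia.
  by rewrite lee_fin hsw.
split.
- by rewrite dvdn_add // dvdnn.
- by rewrite dvdn_add // dvdnn.
- move=> _; lia.
Qed.

Theorem mainTheorem2 (R : realType) (d : nat) (theta : nat -> 'rV[R]_d)
  (f : 'rV[R]_d -> R) (E : nat) (O : nat -> nat) :
  (0 < E)%N ->
  is_optimal_length theta f O ->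
  A1 theta f E O -> A2 theta f E O -> A3 E O -> A4 E O ->
  forall n : nat, is_eval_step E n ->
    (S_len theta f E n < O n)%N /\ (L_len theta f E n < 2 * O n + E)%N.
Proof.
move=> hE hopt _ hA2 _ hA4 n [hn0 /dvdnP [k hk]].
have [_ _ /(_ ltac:(rewrite hk in hn0; lia))] := @main_ind _ _ theta f E O hE hopt hA2 hA4 k.
rewrite -hk => [[h1 h2]]; split => //; lia.
Qed.
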